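(* Let $p$ be a prime, $n\ge2$, $1\le k\le n-1$ and $0\le l\le n$. Then \[ \nu_{n,k,l}(p)=G_{k,n}+(p^l-1)G_{k-1,n-1}, \] and moreover \[ \nu_{n,k,l}(p)/\nu_{n,n-k,n-l}(p)=p^{k+l-n}. \]
   Context: For $0\le j\le n$, $\nu_{n,k,j}(p)=\sum_{W\subset\mathbb{F}_p^n,\ \dim W=k}p^{\dim(W\cap U)}$, where $U\subset\mathbb{F}_p^n$ is any fixed $j$-dimensional subspace (the value is independent of $U$). $G_{a,b}$ is the number of $a$-dimensional subspaces of $\mathbb{F}_p^b$, i.e. $G_{a,b}=\frac{[b]!}{[a]![b-a]!}$ with $[m]=(p^m-1)/(p-1)$ and $[m]!=\prod_{i=1}^m[i]$. *)

(* Defs.v *)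
From HB Require Import structures.
From mathcomp Require Import all_boot all_order all_algebra.
Unset Printing Implicit Defensive.
Import Order.TTheory GRing.Theory Num.Theory.
Local Open Scope ring_scope.

Definition qint (p m : nat) : rat := (p%:Q ^+ m - 1) / (p%:Q - 1).

Definition qfact (p m : nat) : rat := \prod_(1 <= i < m.+1) qint p i.

Definition gauss (p a b : nat) : rat := qfact p b / (qfact p a * qfact p (b - a)).

(* Subspaces of F_p^n (row vectors) are represented by their canonical
   matrices: W : 'M['F_p]_n with <<W>> = W (mxalgebra), dim W = \rank W.
   nu p n k U = sum over k-dimensional subspaces W of p^(dim (W cap U)). *)
Definition nu (p n k : nat) (U : 'M['F_p]_n) : rat :=
  \sum_(W : 'M['F_p]_n | (<<W>>%MS == W) && (\rank W == k))
     p%:Q ^+ \rank (W :&: U)%MS.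

(* Main.v *)
Require Import Defs.
From HB Require Import structures.
From mathcomp Require Import all_boot all_order all_algebra.
From mathcomp Require Import zify ring lra.
Import Order.TTheory GRing.Theory Num.Theory.

Lemma card_sub (F : finFieldType) n m (S : 'M[F]_(m,n)) :
  #|[set v : 'rV[F]_n | (v <= S)%MS]| = #|F| ^ \rank S.
Proof.
have -> : [set v : 'rV[F]_n | (v <= S)%MS] =
   [set (x *m row_base S)%R | x in [set: 'rV[F]_(\rank S)]].
  apply/setP => v; rewrite inE -(eq_row_base S); apply/idP/imsetP.
    by case/submxP => x ->; exists x; rewrite ?inE.
  by case=> x _ ->; apply: submxMl.
rewrite card_imset; last exact: row_free_inj (row_base_free S).
by rewrite cardsT card_mx mul1n.
Qed.

Lemma rank_step (F : fieldType) n r m (A : 'M[F]_(m,n)) (u : 'rV[F]_n) (M : 'M[F]_(r,n)) :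
  (\rank (A + col_mx u M)%MS == \rank A + r.+1)%N =
  ~~ (u <= A)%MS && (\rank ((A + u) + M)%MS == \rank (A + u)%MS + r)%N.
Proof.
have -> : \rank (A + col_mx u M)%MS = \rank ((A + u) + M)%MS.
  by rewrite -addsmxA (adds_eqmx (eqmx_refl A) (addsmxE u M)).
have h1 : (\rank ((A + u) + M)%MS <= \rank (A + u)%MS + r)%N.
  apply: leq_trans (mxrank_adds_leqif _ _) _; rewrite leq_add2l rank_leq_row //.
have h2 : (\rank (A + u)%MS <= \rank A + 1)%N.
  apply: leq_trans (mxrank_adds_leqif _ _) _; rewrite leq_add2l rank_leq_row //.
have h3 := mxrank_leqif_sup (addsmxSl A u).
rewrite addsmx_sub submx_refl /= in h3.
case: h3 => h3 h4.
case uA: (u <= A)%MS; rewrite uA in h4.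
  move/eqP: h4 => h4; rewrite /=; apply/negbTE; lia.
have : \rank A != \rank (A + u)%MS by rewrite h4.
move=> h5 /=; apply/eqP/eqP; lia.
Qed.

Lemma sum_col (F : finFieldType) n r (f : 'M[F]_(r.+1, n) -> nat) :
  \sum_(M : 'M[F]_(r.+1, n)) f M = \sum_(u : 'rV[F]_n) \sum_(M : 'M[F]_(r, n)) f (col_mx u M).
Proof.
rewrite pair_big /=.
rewrite (reindex (fun x : 'rV[F]_n * 'M[F]_(r, n) => (col_mx x.1 x.2 : 'M_(r.+1, n)))) //.
exists (fun M : 'M[F]_(r.+1, n) => (usubmx (M : 'M_(1 + r, n)), dsubmx (M : 'M_(1 + r, n)))).
  by case=> u M _; rewrite col_mxKu col_mxKd.
by move=> M _ /=; rewrite vsubmxK.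
Qed.

Lemma count_ext (F : finFieldType) n (S : 'M[F]_n) r : forall m (A : 'M[F]_(m,n)), (A <= S)%MS ->
  #|[set M : 'M[F]_(r,n) | (M <= S)%MS && (\rank (A + M)%MS == \rank A + r)%N]|
  = \prod_(i < r) (#|F| ^ \rank S - #|F| ^ (\rank A + i)).
Proof.
elim: r => [|r IH] m A AS.
  rewrite big_ord0 (_ : 1%N = #|{: 'M[F]_(0,n)}|); last by rewrite card_mx.
  apply: eq_card => M; rewrite !inE.
  by rewrite flatmx0 sub0mx addsmx0 addn0 eqxx.
rewrite cardsE -sum1_card big_mkcond /= sum_col.
have E : forall u : 'rV[F]_n, \sum_(M : 'M[F]_(r, n))
    (if (col_mx u M <= S)%MS && (\rank (A + col_mx u M)%MS == \rank A + r.+1)%N then 1 else 0)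
  = if (u <= S)%MS && ~~ (u <= A)%MS then
      \prod_(i < r) (#|F| ^ \rank S - #|F| ^ (\rank A + i.+1)) else 0.
  move=> u.
  under eq_bigr => M _ do rewrite rank_step col_mx_sub.
  case uS: (u <= S)%MS; case uA: (u <= A)%MS => /=;
    try by rewrite big1 //= => M _; rewrite ?andbF.
  have AuS : (A + u <= S)%MS by rewrite addsmx_sub AS uS.
  have rAu : \rank (A + u)%MS = (\rank A).+1.
    have := mxrank_leqif_sup (addsmxSl A u); rewrite addsmx_sub submx_refl uA /=.
    case=> h1 h2.
    have h3 : (\rank (A + u)%MS <= \rank A + 1)%N.
      apply: leq_trans (mxrank_adds_leqif _ _) _; rewrite leq_add2l rank_leq_row //.
    have : \rank A != \rank (A + u)%MS by rewrite h2.
    lia.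
  rewrite -big_mkcond /= sum1_card -cardsE.
  rewrite (eq_card (B := [set M : 'M[F]_(r,n) | (M <= S)%MS && (\rank (A + u + M)%MS == \rank (A + u)%MS + r)%N])); last first.
    by [].
  by rewrite IH // rAu; apply: eq_bigr => i _; rewrite addSnnS.
apply: etrans.
  apply: eq_bigr => u _; exact: E.
rewrite -big_mkcond /= sum_nat_const.
rewrite big_ord_recl addn0; congr (_ * _).
rewrite (eq_card (B := [set u : 'rV[F]_n | (u <= S)%MS] :\: [set u : 'rV[F]_n | (u <= A)%MS])); last first.
  by move=> u; rewrite !inE andbC.
rewrite cardsD !card_sub; congr (_ - _).
rewrite -(card_sub _ _ _ A); congr #|pred_of_set _|; apply/setP => u; rewrite !inE.
by case uA: (u <= A)%MS; rewrite ?andbF // (submx_trans uA AS).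
Qed.

Lemma fiber (F : finFieldType) n m (A : 'M[F]_(m,n)) r :
  #|[set M : 'M[F]_(r,n) | (\rank (A + M)%MS == \rank A + r)%N]| =
  #|[set W : 'M[F]_n | [&& <<W>>%MS == W, \rank W == \rank A + r & (A <= W)%MS]]|
   * \prod_(i < r) (#|F| ^ (\rank A + r) - #|F| ^ (\rank A + i)).
Proof.
set Q := fun W : 'M[F]_n => [&& <<W>>%MS == W, \rank W == \rank A + r & (A <= W)%MS].
set P := fun M : 'M[F]_(r,n) => (\rank (A + M)%MS == \rank A + r)%N.
have key : forall W M, P M -> (Q W && (M <= W)%MS) = (W == <<(A + M)%MS>>%MS).
  move=> W M /eqP PM; rewrite /Q; apply/idP/eqP.
    case/andP => /and3P [/eqP gW /eqP rW AW] MW.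
    have AMW : (A + M <= W)%MS by rewrite addsmx_sub AW MW.
    rewrite -gW; apply: eq_genmx; apply/eqmx_sym/eqmxP.
    by rewrite -(mxrank_leqif_eq AMW) PM rW.
  move=> ->; rewrite genmx_id eqxx mxrank_gen PM eqxx /=.
  by rewrite !genmxE addsmxSl addsmxSr.
transitivity (\sum_(W | Q W) #|[set M : 'M[F]_(r,n) | (M <= W)%MS && P M]|); last first.
  rewrite -sum_nat_const; apply: eq_big => [W|W]; first by rewrite inE.
  move=> /and3P [_ /eqP rW AW].
  by rewrite (@count_ext _ _ W _ _ _ AW) rW.
under eq_bigr => W _ do rewrite cardsE -sum1_card big_mkcond /=.
rewrite exchange_big /= cardsE -sum1_card big_mkcond /=.
apply: eq_bigr => M _.
rewrite -big_mkcondr /=.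
rewrite -[M \in _]/(P M).
case PM: (P M); last by rewrite big1 // => W /andP [] _; rewrite /in_mem /= PM andbF.
rewrite (eq_bigl (fun W => W == <<(A + M)%MS>>%MS)); last first.
  by move=> W; rewrite /in_mem /= PM andbT -key // andbA.
by rewrite big_pred1_eq.
Qed.


Lemma Ncount (F : finFieldType) n k :
  (#|[set W : 'M[F]_n | (<<W>>%MS == W) && (\rank W == k)]| * \prod_(i < k) (#|F| ^ k - #|F| ^ i)
   = \prod_(i < k) (#|F| ^ n - #|F| ^ i))%N.
Proof.
have := @fiber _ _ _ (0%R : 'M[F]_(1,n)) k; rewrite mxrank0 add0n.
have -> : [set W : 'M[F]_n | [&& <<W>>%MS == W, \rank W == k & (0%R : 'M[F]_(1,n)) <= W]%MS] =
          [set W : 'M[F]_n | (<<W>>%MS == W) && (\rank W == k)].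
  by apply/setP => W; rewrite !inE sub0mx andbT.
move=> <-.
have := @count_ext F n 1%:M k _ (0%R : 'M[F]_(1,n)) (sub0mx _ _); rewrite mxrank0 mxrank1.
under eq_bigr => i _ do rewrite add0n.
move=> <-; apply: eq_card => M; rewrite !inE submx1 /= add0n.
by rewrite adds0mx.
Qed.

Lemma Ccount (F : finFieldType) n k (v : 'rV[F]_n) : v != 0%R ->
  (#|[set W : 'M[F]_n | [&& <<W>>%MS == W, \rank W == k.+1 & (v <= W)%MS]]|
     * \prod_(i < k) (#|F| ^ k.+1 - #|F| ^ i.+1)
   = \prod_(i < k) (#|F| ^ n - #|F| ^ i.+1))%N.
Proof.
move=> v0.
have := @fiber _ _ _ v k; rewrite rank_rV v0 add1n.
move=> <-.
have := @count_ext F n 1%:M k _ v (submx1 _); rewrite rank_rV v0 mxrank1.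
move=> <-; apply: eq_card => M; rewrite !inE submx1 /=.
by rewrite add1n.
Qed.

Lemma exch (F : finFieldType) n (Q : pred 'M[F]_n) (U : 'M[F]_n) :
  (\sum_(W | Q W) #|[set v : 'rV[F]_n | (v <= W :&: U)%MS]|
   = \sum_(v : 'rV[F]_n | (v <= U)%MS) #|[set W | Q W && (v <= W)%MS]|)%N.
Proof.
under eq_bigr => W _ do rewrite cardsE -sum1_card big_mkcond /=.
rewrite exchange_big /= [RHS]big_mkcond /=.
apply: eq_bigr => v _.
case vU: (v <= U)%MS.
  rewrite cardsE -sum1_card [RHS]big_mkcond /= [LHS]big_mkcond /=.
  by apply: eq_bigr => W _; rewrite /in_mem /= sub_capmx vU andbT; case: (Q W).
by rewrite big1 // => W _; rewrite /in_mem /= sub_capmx vU andbF.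
Qed.

Local Open Scope ring_scope.

Lemma qfactS p m : qfact p m.+1 = qfact p m * qint p m.+1.
Proof. by rewrite /qfact big_nat_recr. Qed.

Lemma qint_neq0 p m : (1 < p)%N -> (0 < m)%N -> qint p m != 0.
Proof.
move=> p1 m0; rewrite /qint mulf_neq0 // ?invr_eq0 subr_eq0.
  rewrite -(natrX _ p m) pnatr_eq1 -(expn0 p) eqn_exp2l //; lia.
by rewrite pnatr_eq1; lia.
Qed.

Lemma qfact_neq0 p m : (1 < p)%N -> qfact p m != 0.
Proof.
move=> p1; elim: m => [|m IH]; first by rewrite /qfact big_geq.
by rewrite qfactS mulf_neq0 // qint_neq0.
Qed.

Lemma qprod p d r : (r <= d)%N ->
  (\prod_(i < r) qint p (d - i)) * qfact p (d - r) = qfact p d.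
Proof.
elim: r => [|r IH] rd; first by rewrite big_ord0 mul1r subn0.
rewrite big_ord_recr /= -mulrA.
have E : qint p (d - r) * qfact p (d - r.+1) = qfact p (d - r).
  have h : (d - r)%N = (d - r.+1).+1 by lia.
  by rewrite h qfactS mulrC.
by rewrite E IH // ltnW.
Qed.

Lemma term p d i : (1 < p)%N -> (i <= d)%N ->
  ((p ^ d - p ^ i)%N)%:R = (p ^ i)%:R * (p%:Q - 1) * qint p (d - i) :> rat.
Proof.
move=> p1 id; rewrite natrB; last by rewrite leq_exp2l.
have hp : p%:Q - 1 != 0 by rewrite subr_eq0 pnatr_eq1; lia.
rewrite /qint -mulrA [(p%:Q - 1) * _]mulrCA mulfV // mulr1.
rewrite mulrBr mulr1 !natrX -exprD subnKC //.
Qed.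

Lemma prodP p d r : (1 < p)%N -> (r <= d)%N ->
  ((\prod_(i < r) (p ^ d - p ^ i))%N)%:R =
  (\prod_(i < r) ((p ^ i)%:R * (p%:Q - 1))) * (qfact p d / qfact p (d - r)) :> rat.
Proof.
move=> p1 rd; rewrite natr_prod -(@qprod p d r rd) mulfK ?qfact_neq0 // -big_split /=.
by apply: eq_bigr => i _; rewrite term //; have := ltn_ord i; lia.
Qed.

Lemma gaussP p d r : (1 < p)%N -> (r <= d)%N ->
  ((\prod_(i < r) (p ^ d - p ^ i))%N)%:R =
  gauss p r d * ((\prod_(i < r) (p ^ r - p ^ i))%N)%:R :> rat.
Proof.
move=> p1 rd; rewrite !prodP // subnn /gauss.
have h0 : qfact p 0 = 1 by rewrite /qfact big_geq.
rewrite h0 divr1.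
have := @qfact_neq0 p r p1; have := @qfact_neq0 p (d - r) p1; have := @qfact_neq0 p d p1.
move=> a b c; field. by rewrite b c.
Qed.

Lemma qint_gt0 p m : (1 < p)%N -> (0 < m)%N -> 0 < qint p m.
Proof.
move=> p1 m0; rewrite /qint divr_gt0 // subr_gt0.
  rewrite -natrX ltr1n; have : (1 < p ^ m)%N by rewrite -(expn0 p) ltn_exp2l. by [].
by rewrite ltr1n.
Qed.

Lemma qfact_gt0 p m : (1 < p)%N -> 0 < qfact p m.
Proof.
move=> p1; elim: m => [|m IH]; first by rewrite /qfact big_geq.
by rewrite qfactS mulr_gt0 // qint_gt0.
Qed.

Lemma gauss_gt0 p a b : (1 < p)%N -> 0 < gauss p a b.
Proof. by move=> p1; rewrite /gauss divr_gt0 ?mulr_gt0 ?qfact_gt0. Qed.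

Lemma R1 p k n : (1 < p)%N -> (1 <= k <= n)%N ->
  gauss p k n * qint p k = qint p n * gauss p (k - 1) (n - 1).
Proof.
move=> p1 /andP [k1 kn].
case: k k1 kn => [//|k] _ kn; case: n kn => [//|n] kn.
rewrite /gauss !subn1 /= subSS !qfactS.
have := @qfact_neq0 p k p1; have := @qfact_neq0 p (n - k) p1.
have := @qint_neq0 p k.+1 p1 isT.
move=> a b c; field. by rewrite a b c.
Qed.

Lemma R2 p k n : (k <= n)%N -> gauss p (n - k) n = gauss p k n.
Proof. by move=> kn; rewrite /gauss subKn // [qfact p (n - k) * _]mulrC. Qed.

Lemma R3 p k N : (1 < p)%N -> (1 <= k <= N)%N ->
  gauss p k N * qint p k = qint p (N - k).+1 * gauss p (k - 1) N.
Proof.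
move=> p1 /andP [k1 kN].
case: k k1 kN => [//|k] _ kN.
rewrite /gauss subn1 /=.
have -> : (N - k = (N - k.+1).+1)%N by lia.
rewrite !qfactS.
have := @qfact_neq0 p k p1; have := @qfact_neq0 p (N - k.+1) p1.
have := @qint_neq0 p k.+1 p1 isT; have := @qint_neq0 p (N - k.+1).+1 p1 isT.
move=> a b c d; field. by rewrite a b c d.
Qed.

Lemma shiftP q d r : (\prod_(i < r) (q ^ d.+1 - q ^ i.+1) = q ^ r * \prod_(i < r) (q ^ d - q ^ i))%N.
Proof.
elim: r => [|r IH]; first by rewrite !big_ord0.
by rewrite !big_ord_recr /= IH !expnS -mulnBr; ring.
Qed.

Lemma X_gt0 q k : (1 < q)%N -> (0 < \prod_(i < k) (q ^ k - q ^ i))%N.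
Proof.
move=> q1; rewrite prodn_gt0 // => i; rewrite subn_gt0 ltn_exp2l //.
Qed.

Lemma Nval p n k : prime p -> (k <= n)%N ->
  (#|[set W : 'M['F_p]_n | (<<W>>%MS == W) && (\rank W == k)]|)%:R = gauss p k n.
Proof.
move=> pr kn; have p1 := prime_gt1 pr.
have := Ncount 'F_p n k; rewrite card_Fp // => /(congr1 (fun x : nat => x%:R : rat)).
have Xnz : ((\prod_(i < k) (p ^ k - p ^ i))%N)%:R != 0 :> rat by rewrite pnatr_eq0 -lt0n X_gt0.
by rewrite natrM (@gaussP p n k p1 kn) => /(mulIf Xnz).
Qed.

Lemma Cval p n k (v : 'rV['F_p]_n) : prime p -> (1 <= k <= n)%N -> v != 0 ->
  (#|[set W : 'M['F_p]_n | ((<<W>>%MS == W) && (\rank W == k)) && (v <= W)%MS]|)%:R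
   = gauss p (k - 1) (n - 1).
Proof.
move=> pr /andP [k1 kn] v0; have p1 := prime_gt1 pr.
case: k k1 kn => [//|k] _ kn; case: n kn v v0 => [//|n] kn v v0.
have kn' : (k <= n)%N by [].
have Xnz : ((\prod_(i < k) (p ^ k - p ^ i))%N)%:R != 0 :> rat by rewrite pnatr_eq0 -lt0n X_gt0.
have cnz : ((p ^ k)%N)%:R != 0 :> rat.
  by rewrite pnatr_eq0 expn_eq0; apply/nandP; left; rewrite -lt0n prime_gt0.
have := @Ccount _ _ k v v0; rewrite card_Fp // !shiftP => /(congr1 (fun x : nat => x%:R : rat)).
rewrite !natrM (@gaussP p n k p1 kn') mulrCA => /(mulfI cnz) /(mulIf Xnz).
rewrite !subn1 /= => <-.
congr (_ %:R); apply: eq_card => W; rewrite !inE andbA //.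
Qed.

Lemma nuE p n k (U : 'M['F_p]_n) : prime p -> (1 <= k <= n)%N ->
  nu p n k U = gauss p k n + (p%:Q ^+ \rank U - 1) * gauss p (k - 1) (n - 1).
Proof.
move=> pr kn; have p1 := prime_gt1 pr.
rewrite /nu.
transitivity (((\sum_(W : 'M['F_p]_n | (<<W>>%MS == W) && (\rank W == k)) #|[set v : 'rV['F_p]_n | (v <= W :&: U)%MS]|)%N)%:R : rat).
  by rewrite natr_sum; apply: eq_bigr => W _; rewrite card_sub card_Fp // natrX.
rewrite exch (bigD1 0%R) ?sub0mx //= natrD.
congr (_ + _).
  rewrite -(@Nval p n k pr); last by case/andP: kn.
  by congr (_%:R); apply: eq_card => W; rewrite !inE sub0mx andbT.
rewrite natr_sum (eq_bigr (fun _ => gauss p (k-1) (n-1))); last first.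
  move=> v /andP [_ v0]; exact: Cval.
rewrite sumr_const -mulr_natl; congr (_ * _); symmetry.
have h := cardsD1 0%R [set v : 'rV['F_p]_n | (v <= U)%MS].
rewrite card_sub card_Fp // inE sub0mx add1n in h.
have -> : #|[pred v : 'rV['F_p]_n | (v <= U)%MS && (v != 0)]| = #|[set v : 'rV['F_p]_n | (v <= U)%MS] :\ 0%R|.
  by apply: eq_card => v; rewrite !inE andbC.
by rewrite -natrX h /= -addn1 natrD addrK.
Qed.

Theorem lemma3p2 (p n k l : nat) :
  prime p -> (2 <= n)%N -> (1 <= k <= n - 1)%N -> (l <= n)%N ->
  forall U : 'M['F_p]_n, \rank U = l ->
    nu p n k U = gauss p k n + (p%:Q ^+ l - 1) * gauss p (k - 1) (n - 1)
    /\ (forall U' : 'M['F_p]_n, \rank U' = (n - l)%N ->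
          nu p n k U / nu p n (n - k) U' = p%:Q ^ (k%:Z + l%:Z - n%:Z)).
Proof.
move=> pr n2 /andP [k1 kn] ln U rU; have p1 := prime_gt1 pr.
have kn' : (1 <= k <= n)%N by apply/andP; split => //; lia.
split; first by rewrite nuE // rU.
move=> U' rU'.
have nkn : (1 <= n - k <= n)%N by apply/andP; split; lia.
rewrite !nuE // rU rU'.
set P := p%:Q.
have Pnz : P != 0 by rewrite pnatr_eq0; lia.
have P1 : P - 1 != 0 by rewrite subr_eq0 pnatr_eq1; lia.
have Pge1 : forall m, 1 <= P ^+ m.
  by move=> m; rewrite /P -natrX ler1n expn_gt0; apply/orP; left; lia.
set g := gauss p (k - 1) (n - 1).
have gpos : 0 < g by rewrite gauss_gt0.
have Ik : qint p k != 0 by rewrite qint_neq0 //.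
have eA : gauss p k n = qint p n * g / qint p k.
  by rewrite -R1 // mulfK.
have eB : gauss p (n - k - 1) (n - 1) = qint p (n - k) * g / qint p k.
  have -> : (n - k - 1 = (n - 1) - k)%N by lia.
  rewrite R2; last by lia.
  have -> : (n - k = (n - 1 - k).+1)%N by lia.
  by rewrite -R3 ?mulfK //; apply/andP; split; lia.
rewrite R2; last by lia.
have Gpos : 0 < gauss p k n by rewrite gauss_gt0.
have D : 0 < gauss p k n + (P ^+ (n - l) - 1) * gauss p (n - k - 1) (n - 1).
  have : 0 <= (P ^+ (n - l) - 1) * gauss p (n - k - 1) (n - 1).
    by rewrite mulr_ge0 ?subr_ge0 ?Pge1 // ltW // gauss_gt0.
  move: Gpos; set a := gauss p k n; set b := (_ * _); lra.
have -> : P ^ (k%:Z + l%:Z - n%:Z) = P ^+ (k + l) / P ^+ n.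
  by rewrite -PoszD expfzDr // -exprnN -!exprnP.
apply/eqP; rewrite eqr_div ?(gt_eqF D) ?expf_neq0 //; apply/eqP.
rewrite eA eB /qint.
have en : P ^+ n = P ^+ k * P ^+ (n - k) by rewrite -exprD subnKC //; lia.
have el : P ^+ (n - l) = P ^+ n / P ^+ l by rewrite -{2}(subnK ln) exprD mulfK // expf_neq0.
rewrite el exprD en.
have := expf_neq0 k Pnz; have := expf_neq0 l Pnz; have := expf_neq0 (n - k) Pnz.
have : P ^+ k - 1 != 0.
  rewrite subr_eq0 /P -natrX pnatr_eq1 -(expn0 p) eqn_exp2l //; lia.
move: Ik; rewrite /qint.
move=> *; field.
by apply/and3P; split => //; rewrite subr_eq0 pnatr_eq1; lia.
Qed.
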